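(* Let $n\ge3$, $m\in\{2,3,\dots,n-1\}$ and $t\in(0,1]$. Then there exist a Hilbert space $\mathcal H$ and operators $T_1,\dots,T_n\in B(\mathcal H)$ with $\sum_{i=1}^nT_iT_i^*\le I$ and $\operatorname{rank}(I-\sum_iT_iT_i^* )<\infty$ such that, with $\varphi(X):=\sum_iT_iXT_i^*$ and $\varphi^*(X):=\sum_iT_i^*XT_i$, one has $\|\varphi^*(I)\|=m$ and $\operatorname{curv}_*(\varphi,I)=t$.
   Context: A tuple $T_1,\dots,T_n$ defines a Hilbert module over the free semigroup algebra; ''finite rank contractive'' means $\sum_iT_iT_i^*\le I$ and $\dim\overline{(I-\sum_iT_iT_i^* )\mathcal H}<\infty$. For positive $D$ with $\varphi(D)\le D$, $\operatorname{curv}_*(\varphi,D):=\lim_{k\to\infty}\frac{\operatorname{trace}[K_{\varphi,D}^*(P_{\le k}\otimes I)K_{\varphi,D}]}{1+\|\varphi^*(I)\|+\cdots+\|\varphi^*(I)\|^k}$, where $K_{\varphi,D}h:=\sum_{\alpha\in\mathbb F_n^+}e_\alpha\otimes(D-\varphi(D))^{1/2}T_\alpha^*h$ maps $\mathcal H$ into $F^2(H_n)\otimes\mathcal H$ ($F^2(H_n)$ the full Fock space with orthonormal basis $\{e_\alpha\}$ indexed by words in the free semigroup $\mathbb F_n^+$), and $P_{\le k}$ is the projection onto $\operatorname{span}\{e_\alpha:|\alpha|\le k\}$. *)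

(* Defs.v *)
From HB Require Import structures.
From mathcomp Require Import all_boot all_order all_algebra.
From mathcomp Require Import complex.
From mathcomp Require Import all_classical all_reals all_analysis.
Set Implicit Arguments. Unset Strict Implicit. Unset Printing Implicit Defensive.
Import Order.TTheory GRing.Theory Num.Theory.
Local Open Scope ring_scope.

Section HilbertDefs.
Variable R : realType.
Local Notation C := (complex R).
Variable H : lmodType C.
(* ip : inner product, linear in the first argument *)
Variable ip : H -> H -> C.

Definition cRe (z : C) : R := @complex.Re R z.
Definition cIm (z : C) : R := @complex.Im R z.
Definition cconj (z : C) : C := @complex.Complex R (cRe z) (- cIm z).

Definition is_inner_product : Prop :=
  [/\ forall (a : C) x y z, ip (a *: x + y) z = a * ip x z + ip y z,
      forall x y, ip y x = cconj (ip x y),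
      forall x, cIm (ip x x) = 0 /\ 0 <= cRe (ip x x)
    & forall x, ip x x = 0 -> x = 0].

Definition hnorm (x : H) : R := Num.sqrt (cRe (ip x x)).

Definition is_complete : Prop :=
  forall u : nat -> H,
    (forall e : R, 0 < e -> exists N, forall p q, (N <= p)%N -> (N <= q)%N ->
        hnorm (u p - u q) < e) ->
    exists l : H, forall e : R, 0 < e -> exists N, forall p, (N <= p)%N ->
        hnorm (u p - l) < e.

Definition is_hilbert : Prop := is_inner_product /\ is_complete.

Definition bounded_op (T : H -> H) : Prop :=
  (forall (a : C) x y, T (a *: x + y) = a *: T x + T y) /\
  exists c : R, forall x, hnorm (T x) <= c * hnorm x.

Definition is_adjoint (T S : H -> H) : Prop :=
  forall x y, ip (T x) y = ip x (S y).

Definition op_le (A B : H -> H) : Prop :=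
  forall x, cIm (ip (A x) x) = cIm (ip (B x) x) /\ cRe (ip (A x) x) <= cRe (ip (B x) x).

(* dim of the closure of the range of A is finite: the range lies in the span
   of finitely many vectors (a finite-dimensional subspace is closed) *)
Definition finite_rank (A : H -> H) : Prop :=
  exists s : seq H, forall x, exists c : nat -> C,
    A x = \sum_(i < size s) c i *: nth 0 s i.

Definition opnorm (A : H -> H) : R :=
  sup [set hnorm (A x) | x in [set x | hnorm x <= 1]].

Definition orthonormal (s : seq H) : Prop :=
  forall i j, (i < size s)%N -> (j < size s)%N ->
    ip (nth 0 s i) (nth 0 s j) = (if i == j then 1 else 0).

(* trace of a positive operator A: sup over finite orthonormal families of
   sum <A e, e>, i.e. the sum over an orthonormal basis *)
Definition ptrace (A : H -> H) : \bar R :=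
  ereal_sup [set ((\sum_(e <- s) cRe (ip (A e) e))%:E)%E | s in orthonormal].

Variable n : nat.
Variable T Ts : 'I_n -> H -> H.

Definition phi (X : H -> H) : H -> H := fun x => \sum_(i < n) T i (X (Ts i x)).
Definition phistar (X : H -> H) : H -> H := fun x => \sum_(i < n) Ts i (X (T i x)).

Definition Talpha (a : seq 'I_n) : H -> H := foldr (fun i f => T i \o f) id a.
Definition Tsalpha (a : seq 'I_n) : H -> H := foldr (fun i f => f \o Ts i) id a.

Definition defect (D : H -> H) : H -> H := fun x => D x - phi D x.

(* K^*_{phi,D} (P_{<=k} (x) I) K_{phi,D}
   = sum_{|alpha| <= k} T_alpha (D - phi(D))^{1/2} (D - phi(D))^{1/2} T_alpha^* *)
Definition KPK (D : H -> H) (k : nat) : H -> H := fun x =>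
  \sum_(j < k.+1) \sum_(a : j.-tuple 'I_n) Talpha a (defect D (Tsalpha a x)).

Definition curv_seq (D : H -> H) (k : nat) : \bar R :=
  (ptrace (KPK D k) *
   ((\sum_(j < k.+1) opnorm (phistar id) ^+ j)^-1)%:E)%E.

Definition curv_eq (D : H -> H) (c : R) : Prop :=
  (curv_seq D @ \oo --> (c%:E)%E)%classic.

End HilbertDefs.

(* Main.v *)
Require Import Defs.
From HB Require Import structures.
From mathcomp Require Import all_boot all_order all_algebra.
From mathcomp Require Import complex.
From mathcomp Require Import all_classical all_reals all_analysis.
From mathcomp Require Import ring lra zify.
Import Order.TTheory GRing.Theory Num.Theory.
Import numFieldTopology.Exports numFieldNormedType.Exports.
Local Open Scope ring_scope.
Local Open Scope classical_set_scope.
Set Implicit Arguments. Unset Strict Implicit. Unset Printing Implicit Defensive.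
Section Construction.
Variable R : realType.
Variables (m : nat) (t : R).
Hypothesis m2 : (2 <= m)%N.
Hypothesis t0 : 0 < t.
Hypothesis t1 : t <= 1.
Local Notation C := (complex R).

Definition inV (k p : nat) : bool :=
  (p < m ^ k)%N && ((k <= 1)%N || (p%:R < t * (m ^ k)%:R)).

Definition sq (z : C) : R := complex.Re z ^+ 2 + complex.Im z ^+ 2.

Definition psum (f : nat -> nat -> R) (K : nat) : R :=
  \sum_(k < K) \sum_(p < m ^ k) f k p.

Lemma sq_ge0 z : 0 <= sq z.
Proof. by rewrite /sq addr_ge0 // sqr_ge0. Qed.

Lemma sq0 : sq 0 = 0.
Proof. by rewrite /sq /= expr0n /= addr0. Qed.

Lemma sqD a b : sq (a + b) <= 2 * sq a + 2 * sq b.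
Proof. case: a => a1 a2; case: b => b1 b2; rewrite /sq /=.
have := sqr_ge0 (a1 - b1); have := sqr_ge0 (a2 - b2); nra. Qed.

Lemma sqN a : sq (- a) = sq a.
Proof. case: a => a1 a2; rewrite /sq /=; ring. Qed.

Lemma sqM a b : sq (a * b) = sq a * sq b.
Proof. case: a => a1 a2; case: b => b1 b2; rewrite /sq /=; ring. Qed.

Lemma sq_eq0 a : sq a = 0 -> a = 0.
Proof.
case: a => a1 a2; rewrite /sq /= => h.
have h1 : a1 = 0 by nra.
have h2 : a2 = 0 by nra.
by rewrite h1 h2.
Qed.

Lemma psum_le f g K : (forall k p, f k p <= g k p) -> psum f K <= psum g K.
Proof. by move=> h; apply: ler_sum => k _; apply: ler_sum => p _. Qed.

Lemma psumD f g K : psum (fun k p => f k p + g k p) K = psum f K + psum g K.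
Proof. by rewrite /psum -big_split /=; apply: eq_bigr => k _; rewrite big_split. Qed.

Lemma psumZ c f K : psum (fun k p => c * f k p) K = c * psum f K.
Proof. by rewrite /psum mulr_sumr; apply: eq_bigr => k _; rewrite mulr_sumr. Qed.

Lemma psumN f K : psum (fun k p => - f k p) K = - psum f K.
Proof. by rewrite /psum -sumrN; apply: eq_bigr => k _; rewrite sumrN. Qed.

Lemma psum_ge0 f K : (forall k p, 0 <= f k p) -> 0 <= psum f K.
Proof. by move=> h; apply: sumr_ge0 => k _; apply: sumr_ge0. Qed.

Lemma psum_mono f K K' : (forall k p, 0 <= f k p) -> (K <= K')%N -> psum f K <= psum f K'.
Proof.
move=> h le; rewrite /psum -(subnKC le) big_split_ord /= lerDl.
by apply: sumr_ge0 => k _; apply: sumr_ge0.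
Qed.

Definition isl2 (x : nat -> nat -> C) : Prop :=
  (forall k p, ~~ inV k p -> x k p = 0) /\
  exists M : R, forall K, psum (fun k p => sq (x k p)) K <= M.

Record L2 := MkL2 { vec : nat -> nat -> C; vecP : `[< isl2 vec >] }.

Lemma vecl2 (x : L2) : isl2 (vec x).
Proof. exact/asboolP/(vecP x). Qed.

Lemma L2_ext (x y : L2) : (forall k p, vec x k p = vec y k p) -> x = y.
Proof.
case: x => x hx; case: y => y hy /= h.
have exy : x = y by apply/funext => k; apply/funext => p.
by subst y; congr MkL2; apply: bool_irrelevance.
Qed.

Lemma isl2_0 : isl2 (fun _ _ => 0).
Proof.
split => //; exists 0 => K; rewrite /psum big1 // => k _; rewrite big1 // => p _.
exact: sq0.
Qed.

Lemma isl2_add x y : isl2 x -> isl2 y -> isl2 (fun k p => x k p + y k p).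
Proof.
move=> [sx [Mx hx]] [sy [My hy]]; split.
  by move=> k p hp; rewrite sx // sy // addr0.
exists (2 * Mx + 2 * My) => K.
apply: le_trans (_ : psum (fun k p => 2 * sq (x k p) + 2 * sq (y k p)) K <= _).
  by apply: psum_le => k p; apply: sqD.
rewrite psumD !psumZ; apply: lerD; rewrite ler_pM2l //.
Qed.

Lemma isl2_scale (c : C) x : isl2 x -> isl2 (fun k p => c * x k p).
Proof.
move=> [sx [Mx hx]]; split.
  by move=> k p hp; rewrite sx // mulr0.
exists (sq c * Mx) => K.
have -> : psum (fun k p => sq (c * x k p)) K = sq c * psum (fun k p => sq (x k p)) K.
  by rewrite -psumZ; congr psum; apply/funext=> k; apply/funext => p; rewrite sqM.
by rewrite ler_wpM2l // sq_ge0.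
Qed.

Lemma isl2_opp x : isl2 x -> isl2 (fun k p => - x k p).
Proof.
move=> h; have := isl2_scale (-1) h.
by congr isl2; apply/funext=> k; apply/funext => p; rewrite mulN1r.
Qed.

Definition L2zero := MkL2 (asboolT isl2_0).
Definition L2add (x y : L2) : L2 :=
  MkL2 (asboolT (isl2_add (vecl2 x) (vecl2 y))).
Definition L2opp (x : L2) : L2 := MkL2 (asboolT (isl2_opp (vecl2 x))).
Definition L2scale (c : C) (x : L2) : L2 := MkL2 (asboolT (isl2_scale c (vecl2 x))).

Lemma L2addA : associative L2add.
Proof. by move=> x y z; apply: L2_ext => k p /=; rewrite addrA. Qed.
Lemma L2addC : commutative L2add.
Proof. by move=> x y; apply: L2_ext => k p /=; rewrite addrC. Qed.
Lemma L2add0 : left_id L2zero L2add.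
Proof. by move=> x; apply: L2_ext => k p /=; rewrite add0r. Qed.
Lemma L2addN : left_inverse L2zero L2opp L2add.
Proof. by move=> x; apply: L2_ext => k p /=; rewrite addNr. Qed.

HB.instance Definition _ := gen_eqMixin L2.
HB.instance Definition _ := gen_choiceMixin L2.
HB.instance Definition _ := GRing.isZmodule.Build L2 L2addA L2addC L2add0 L2addN.

Lemma L2scaleA a b v : L2scale a (L2scale b v) = L2scale (a * b) v.
Proof. by apply: L2_ext => k p /=; rewrite mulrA. Qed.
Lemma L2scale1 : left_id 1 L2scale.
Proof. by move=> x; apply: L2_ext => k p /=; rewrite mul1r. Qed.
Lemma L2scaleDr : right_distributive L2scale +%R.
Proof. by move=> a x y; apply: L2_ext => k p /=; rewrite mulrDr. Qed.
Lemma L2scaleDl v : {morph L2scale^~ v : a b / a + b >-> a + b}.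
Proof. by move=> a b; apply: L2_ext => k p /=; rewrite mulrDl. Qed.

HB.instance Definition _ := GRing.Zmodule_isLmodule.Build C L2 L2scaleA L2scale1 L2scaleDr L2scaleDl.

Lemma vecD (x y : L2) k p : vec (x + y) k p = vec x k p + vec y k p.
Proof. by []. Qed.
Lemma vecN (x : L2) k p : vec (- x) k p = - vec x k p.
Proof. by []. Qed.
Lemma vecB (x y : L2) k p : vec (x - y) k p = vec x k p - vec y k p.
Proof. by []. Qed.
Lemma vecZ (c : C) (x : L2) k p : vec (c *: x) k p = c * vec x k p.
Proof. by []. Qed.
Lemma vec0 k p : vec (0 : L2) k p = 0.
Proof. by []. Qed.
Lemma vec_sum I (r : seq I) (P : pred I) (F : I -> L2) k p :
  vec (\sum_(i <- r | P i) F i) k p = \sum_(i <- r | P i) vec (F i) k p.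
Proof.
by apply: (big_morph (fun x : L2 => vec x k p)) => // x y; rewrite vecD.
Qed.
Definition nrm2 (x : L2) : R := limn (psum (fun k p => sq (vec x k p))).

Lemma psum_sq_homo (x : L2) :
  {homo psum (fun k p => sq (vec x k p)) : a b / (a <= b)%N >-> a <= b}.
Proof. by move=> a b ab; apply: psum_mono => // k p; apply: sq_ge0. Qed.

Lemma cvg_nrm2 (x : L2) : psum (fun k p => sq (vec x k p)) @ \oo --> nrm2 x.
Proof.
apply: nondecreasing_is_cvgn; first exact: psum_sq_homo.
have [_ [M hM]] := vecl2 x.
by exists M => _ [K _ <-]; apply: hM.
Qed.

Lemma psum_le_nrm2 (x : L2) K : psum (fun k p => sq (vec x k p)) K <= nrm2 x.
Proof. apply: nondecreasing_cvgn_le; [exact: psum_sq_homo | exact: cvg_nrm2]. Qed.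

Lemma nrm2_le (x : L2) M : (forall K, psum (fun k p => sq (vec x k p)) K <= M) -> nrm2 x <= M.
Proof.
move=> h; apply: limr_le; first exact: cvg_nrm2.
by near=> K; apply: h.
Unshelve. all: end_near.
Qed.

Lemma nrm2_ge0 (x : L2) : 0 <= nrm2 x.
Proof. apply: le_trans (psum_le_nrm2 x 0); by rewrite /psum big_ord0. Qed.

Lemma Re_conj_polar (a b : C) :
  complex.Re (a * conjc b) = (sq (a + b) - sq (a - b)) / 4%:R.
Proof. case: a => a1 a2; case: b => b1 b2; rewrite /sq /=; by field. Qed.

Lemma Im_conj_polar (a b : C) :
  complex.Im (a * conjc b) = (sq (a + 'i * b) - sq (a - 'i * b)) / 4%:R.
Proof. case: a => a1 a2; case: b => b1 b2; rewrite /sq /=; by field. Qed.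

Definition reF (x y : L2) k p := complex.Re (vec x k p * conjc (vec y k p)).
Definition imF (x y : L2) k p := complex.Im (vec x k p * conjc (vec y k p)).

Lemma polar_cvg (f : nat -> nat -> R) (u v : L2) :
  (forall k p, f k p = (sq (vec u k p) - sq (vec v k p)) / 4%:R) ->
  psum f @ \oo --> (nrm2 u - nrm2 v) / 4%:R.
Proof.
move=> h.
have -> : psum f = (fun K => (psum (fun k p => sq (vec u k p)) K -
                              psum (fun k p => sq (vec v k p)) K) / 4%:R).
  apply/funext => K; rewrite mulrC -psumN -psumD -psumZ.
  by congr psum; apply/funext=> k; apply/funext=> p; rewrite h mulrC.
apply: cvgMr_tmp; apply: cvgB; exact: cvg_nrm2.
Qed.

Definition ipRe (x y : L2) : R := limn (psum (reF x y)).
Definition ipIm (x y : L2) : R := limn (psum (imF x y)).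

Lemma cvg_reF x y : psum (reF x y) @ \oo --> ipRe x y.
Proof.
apply/cvg_ex; exists ((nrm2 (x + y) - nrm2 (x - y)) / 4%:R).
by apply: polar_cvg => k p; rewrite /reF Re_conj_polar.
Qed.

Lemma cvg_imF x y : psum (imF x y) @ \oo --> ipIm x y.
Proof.
apply/cvg_ex; exists ((nrm2 (x + 'i *: y) - nrm2 (x - 'i *: y)) / 4%:R).
by apply: polar_cvg => k p; rewrite /imF Im_conj_polar.
Qed.

Definition ip (x y : L2) : C := Complex (ipRe x y) (ipIm x y).
Lemma psum_ext f g K : (forall k p, f k p = g k p) -> psum f K = psum g K.
Proof. by move=> h; apply: eq_bigr => k _; apply: eq_bigr => p _. Qed.

Lemma psum_lin3 (F f g h : nat -> nat -> R) a b c :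
  (forall k p, F k p = a * f k p + b * g k p + c * h k p) ->
  psum F = (fun K => a * psum f K + b * psum g K + c * psum h K).
Proof.
move=> e; apply/funext => K; rewrite -!psumZ -!psumD.
by apply: psum_ext.
Qed.

Lemma limn_eq (u : nat -> R) l : u @ \oo --> l -> limn u = l.
Proof. by move=> h; apply: cvg_lim. Qed.

Lemma cvg_lin3 (u v w : nat -> R) a b c lu lv lw :
  u @ \oo --> lu -> v @ \oo --> lv -> w @ \oo --> lw ->
  (fun K => a * u K + b * v K + c * w K) @ \oo --> a * lu + b * lv + c * lw.
Proof.
move=> hu hv hw; apply: cvgD; first apply: cvgD.
all: by apply: cvgMl_tmp.
Qed.

Lemma ipRe_lin (a : C) (x y z : L2) :
  ipRe (a *: x + y) z = complex.Re a * ipRe x z + (- complex.Im a) * ipIm x z + 1 * ipRe y z.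
Proof.
apply: limn_eq; rewrite (@psum_lin3 _ (reF x z) (imF x z) (reF y z) (complex.Re a) (- complex.Im a) 1).
  by apply: cvg_lin3; [exact: cvg_reF | exact: cvg_imF | exact: cvg_reF].
move=> k p; rewrite /reF /imF vecD vecZ.
case: a => a1 a2; case: (vec x k p) => x1 x2; case: (vec y k p) => y1 y2; case: (vec z k p) => z1 z2.
rewrite /=; ring.
Qed.

Lemma ipIm_lin (a : C) (x y z : L2) :
  ipIm (a *: x + y) z = complex.Re a * ipIm x z + complex.Im a * ipRe x z + 1 * ipIm y z.
Proof.
apply: limn_eq; rewrite (@psum_lin3 _ (imF x z) (reF x z) (imF y z) (complex.Re a) (complex.Im a) 1).
  by apply: cvg_lin3; [exact: cvg_imF | exact: cvg_reF | exact: cvg_imF].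
move=> k p; rewrite /reF /imF vecD vecZ.
case: a => a1 a2; case: (vec x k p) => x1 x2; case: (vec y k p) => y1 y2; case: (vec z k p) => z1 z2.
rewrite /=; ring.
Qed.

Lemma ip_lin (a : C) x y z : ip (a *: x + y) z = a * ip x z + ip y z.
Proof.
rewrite /ip ipRe_lin ipIm_lin; case: a => a1 a2 /=.
apply/eqP; rewrite eq_complex /=; apply/andP; split; apply/eqP; ring.
Qed.

Lemma ipRe_sym x y : ipRe y x = ipRe x y.
Proof.
apply: limn_eq; rewrite (_ : psum (reF y x) = psum (reF x y)); first exact: cvg_reF.
apply/funext => K; apply: psum_ext => k p; rewrite /reF.
case: (vec x k p) => x1 x2; case: (vec y k p) => y1 y2; rewrite /=; ring.
Qed.

Lemma ipIm_sym x y : ipIm y x = - ipIm x y.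
Proof.
apply: limn_eq; rewrite (_ : psum (imF y x) = (fun K => - psum (imF x y) K)).
  by apply: cvgN; exact: cvg_imF.
apply/funext => K; rewrite -psumN; apply: psum_ext => k p; rewrite /imF.
case: (vec x k p) => x1 x2; case: (vec y k p) => y1 y2; rewrite /=; ring.
Qed.

Lemma ipRe_nrm2 x : ipRe x x = nrm2 x.
Proof.
apply: limn_eq; rewrite (_ : psum (reF x x) = psum (fun k p => sq (vec x k p))).
  exact: cvg_nrm2.
apply/funext => K; apply: psum_ext => k p; rewrite /reF /sq.
case: (vec x k p) => x1 x2; rewrite /=; ring.
Qed.

Lemma ipIm_self x : ipIm x x = 0.
Proof.
apply: limn_eq; rewrite (_ : psum (imF x x) = (fun _ => 0)); first exact: cvg_cst.
apply/funext => K; rewrite /psum big1 // => k _; rewrite big1 // => p _.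
rewrite /imF; case: (vec x k p) => x1 x2; rewrite /=; ring.
Qed.

Lemma term_le_psum (f : nat -> nat -> R) k p :
  (forall k p, 0 <= f k p) -> (p < m ^ k)%N -> f k p <= psum f k.+1.
Proof.
move=> h hp; rewrite /psum big_ord_recr /=.
apply: le_trans (_ : \sum_(q < m ^ k) f k q <= _).
  rewrite (bigD1 (Ordinal hp)) //= lerDl; apply: sumr_ge0 => q _; exact: h.
rewrite lerDr; apply: sumr_ge0 => i _; apply: sumr_ge0 => q _; exact: h.
Qed.

Lemma nrm2_eq0 x : nrm2 x = 0 -> x = 0.
Proof.
move=> h0; apply: L2_ext => k p; rewrite vec0.
have [sx _] := vecl2 x.
case hv: (inV k p); last by apply: sx; rewrite hv.
move: hv => /andP [hp _].
apply: sq_eq0; apply/eqP; rewrite eq_le sq_ge0 andbT.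
rewrite -h0; apply: le_trans (psum_le_nrm2 x k.+1).
by apply: (@term_le_psum (fun k p => sq (vec x k p))) => // ? ?; apply: sq_ge0.
Qed.

Lemma ip_is_inner : is_inner_product ip.
Proof.
split.
- exact: ip_lin.
- move=> x y; rewrite /ip /cconj /cRe /cIm /=.
  by rewrite ipRe_sym ipIm_sym.
- move=> x; rewrite /cIm /cRe /= ipIm_self ipRe_nrm2; split => //; exact: nrm2_ge0.
- move=> x [] h _; apply: nrm2_eq0; by rewrite -ipRe_nrm2.
Qed.
Lemma cvg_big (I : Type) (r : seq I) (F : nat -> I -> R) (G : I -> R) :
  (forall i, (fun q => F q i) @ \oo --> G i) ->
  (fun q => \sum_(i <- r) F q i) @ \oo --> \sum_(i <- r) G i.
Proof.
move=> h; elim: r => [|i r IH].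
  have -> : (fun q => \sum_(j <- [::]) F q j) = (fun _ => 0).
    by apply/funext => q; rewrite big_nil.
  rewrite big_nil; exact: cvg_cst.
have -> : (fun q => \sum_(j <- i :: r) F q j) = (fun q => F q i + \sum_(j <- r) F q j).
  by apply/funext => q; rewrite big_cons.
rewrite big_cons; apply: cvgD; [exact: h | exact: IH].
Qed.

Lemma cvg_psum (F : nat -> nat -> nat -> R) (G : nat -> nat -> R) K :
  (forall k p, (fun q => F q k p) @ \oo --> G k p) ->
  (fun q => psum (F q) K) @ \oo --> psum G K.
Proof.
move=> h; rewrite /psum; apply: cvg_big => k; apply: cvg_big => p; exact: h.
Qed.

Lemma cauchy_seq_cvg (a : nat -> R) :
  (forall e, 0 < e -> exists N, forall p q, (N <= p)%N -> (N <= q)%N -> `|a p - a q| < e) ->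
  cvgn a.
Proof.
move=> h; apply/cauchy_cvgP; apply: cauchy_exP => e e0.
have [N hN] := h e e0; exists (a N); exists N => // n hn /=.
by rewrite -ball_normE; apply: hN.
Qed.

Lemma sq_le_nrm2 (x : L2) k p : (p < m ^ k)%N -> sq (vec x k p) <= nrm2 x.
Proof.
move=> hp; apply: le_trans (psum_le_nrm2 x k.+1).
by apply: (@term_le_psum (fun k p => sq (vec x k p))) => // ? ?; apply: sq_ge0.
Qed.

Lemma hnormE (x : L2) : hnorm ip x = Num.sqrt (nrm2 x).
Proof. by rewrite /hnorm /cRe /= ipRe_nrm2. Qed.

Lemma sqrt_lt_sq (a c : R) : 0 <= a -> 0 < c -> Num.sqrt a < c -> a < c ^+ 2.
Proof.
move=> a0 c0 h; rewrite -(sqr_sqrtr a0).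
have s0 := sqrtr_ge0 a; nra.
Qed.

Lemma abs_lt_of_sq (a c : R) : 0 < c -> a ^+ 2 < c ^+ 2 -> `|a| < c.
Proof. move=> c0 h; case: (ler0P a) => ha; nra. Qed.

Lemma nrm2_le_hnorm (x : L2) e : 0 < e -> (nrm2 x <= e ^+ 2) -> hnorm ip x <= e.
Proof.
move=> e0 h; rewrite hnormE.
have -> : e = Num.sqrt (e ^+ 2) by rewrite sqrtr_sqr ger0_norm // ltW.
by rewrite ler_sqrt // exprn_ge0 // ltW.
Qed.

Lemma ip_complete : is_complete ip.
Proof.
move=> u hc.
have hc2 : forall e, 0 < e -> exists N, forall p q, (N <= p)%N -> (N <= q)%N ->
    nrm2 (u p - u q) < e ^+ 2.
  move=> e e0; have [N hN] := hc e e0; exists N => p q hp hq.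
  apply: sqrt_lt_sq => //; first exact: nrm2_ge0.
  by rewrite -hnormE; apply: hN.
have cvRe : forall k p, cvgn (fun n => complex.Re (vec (u n) k p)).
  move=> k p; apply: cauchy_seq_cvg => e e0.
  have [N hN] := hc2 e e0; exists N => a b ha hb.
  case hp: (p < m ^ k)%N; last first.
    have [s _] := vecl2 (u a); have [s' _] := vecl2 (u b).
    by rewrite s ?s' /inV ?hp // subrr normr0.
  apply: abs_lt_of_sq => //; apply: le_lt_trans (hN a b ha hb).
  apply: le_trans (sq_le_nrm2 (u a - u b) hp); rewrite /sq vecB.
  case: (vec (u a) k p) => x1 x2; case: (vec (u b) k p) => y1 y2 /=.
  by rewrite lerDl sqr_ge0.
have cvIm : forall k p, cvgn (fun n => complex.Im (vec (u n) k p)).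
  move=> k p; apply: cauchy_seq_cvg => e e0.
  have [N hN] := hc2 e e0; exists N => a b ha hb.
  case hp: (p < m ^ k)%N; last first.
    have [s _] := vecl2 (u a); have [s' _] := vecl2 (u b).
    by rewrite s ?s' /inV ?hp // subrr normr0.
  apply: abs_lt_of_sq => //; apply: le_lt_trans (hN a b ha hb).
  apply: le_trans (sq_le_nrm2 (u a - u b) hp); rewrite /sq vecB.
  case: (vec (u a) k p) => x1 x2; case: (vec (u b) k p) => y1 y2 /=.
  by rewrite lerDr sqr_ge0.
pose l k p : C := Complex (limn (fun n => complex.Re (vec (u n) k p)))
                          (limn (fun n => complex.Im (vec (u n) k p))).
have key : forall e, 0 < e -> exists N, forall a K, (N <= a)%N ->
    psum (fun k p => sq (vec (u a) k p - l k p)) K <= e ^+ 2.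
  move=> e e0; have [N hN] := hc2 e e0; exists N => a K ha.
  have hcv : (fun q => psum (fun k p => sq (vec (u a - u q) k p)) K) @ \oo -->
             psum (fun k p => sq (vec (u a) k p - l k p)) K.
    apply: cvg_psum => k p.
    have -> : (fun q => sq (vec (u a - u q) k p)) =
      (fun q => (complex.Re (vec (u a) k p) - complex.Re (vec (u q) k p)) *
                (complex.Re (vec (u a) k p) - complex.Re (vec (u q) k p)) +
                (complex.Im (vec (u a) k p) - complex.Im (vec (u q) k p)) *
                (complex.Im (vec (u a) k p) - complex.Im (vec (u q) k p))).
      apply/funext => q; rewrite /sq vecB.
      by case: (vec (u a) k p) => x1 x2; case: (vec (u q) k p) => y1 y2 /=; rewrite !expr2.
    have -> : sq (vec (u a) k p - l k p) =
      (complex.Re (vec (u a) k p) - complex.Re (l k p)) *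
      (complex.Re (vec (u a) k p) - complex.Re (l k p)) +
      (complex.Im (vec (u a) k p) - complex.Im (l k p)) *
      (complex.Im (vec (u a) k p) - complex.Im (l k p)).
      by rewrite /sq; case: (vec (u a) k p) => x1 x2; case: (l k p) => y1 y2 /=; rewrite !expr2.
    apply: cvgD; apply: cvgM; apply: cvgB; (try exact: cvg_cst); rewrite /l /=.
    + exact: cvRe.
    + exact: cvRe.
    + exact: cvIm.
    + exact: cvIm.
  rewrite -(cvg_lim _ hcv) //; apply: limr_le; first by apply/cvg_ex; eexists; exact: hcv.
  near=> q; apply: le_trans (psum_le_nrm2 _ K) _; apply: ltW; apply: hN => //.
  near: q; exact: nbhs_infty_ge.
have lsupp : forall k p, ~~ inV k p -> l k p = 0.
  move=> k p hk; rewrite /l.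
  have e1 : forall n, vec (u n) k p = 0 by move=> n; have [s _] := vecl2 (u n); exact: s.
  have -> : (fun n => complex.Re (vec (u n) k p)) = (fun _ => 0).
    by apply/funext => n; rewrite e1.
  have -> : (fun n => complex.Im (vec (u n) k p)) = (fun _ => 0).
    by apply/funext => n; rewrite e1.
  by rewrite lim_cst.
have [N1 hN1] := key 1 ltr01.
have hd : isl2 (fun k p => vec (u N1) k p - l k p).
  split; first by move=> k p hk; rewrite lsupp //; have [s _] := vecl2 (u N1); rewrite s // subr0.
  by exists (1 ^+ 2) => K; apply: hN1.
have hl : isl2 l.
  have := isl2_add (vecl2 (u N1)) (isl2_opp hd).
  by congr isl2; apply/funext => k; apply/funext => p; rewrite opprB addrC subrK.
exists (MkL2 (asboolT hl)) => e e0.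
have h2 : (0 : R) < 2 by lra.
have [N hN] := key (e / 2) (divr_gt0 e0 h2).
exists N => a ha.
apply: le_lt_trans (_ : e / 2 < e); last by rewrite ltr_pdivrMr // ltr_pMr // ltr1n.
apply: nrm2_le_hnorm; first by rewrite divr_gt0.
apply: nrm2_le => K; apply: le_trans (hN a K ha).
by apply: psum_le => k p.
Unshelve. all: end_near.
Qed.
Lemma divmodP p i : (i < m)%N -> ((m * p + i) %/ m = p)%N /\ ((m * p + i) %% m = i)%N.
Proof.
move=> hi; have m0 : (0 < m)%N by apply: leq_trans m2.
rewrite mulnC divnMDl // modnMDl divn_small // modn_small //; split => //; exact: addn0.
Qed.

Lemma reidx (V : zmodType) (G : nat -> V) i M : (i < m)%N ->
  \sum_(q < m * M) (if (q %% m == i)%N then G q else 0) = \sum_(p < M) G (m * p + i)%N.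
Proof.
move=> hi; elim: M => [|M IH]; first by rewrite muln0 !big_ord0.
rewrite big_ord_recr /= -IH.
rewrite -(big_mkord xpredT (fun q => if (q %% m == i)%N then G q else 0)).
rewrite -(big_mkord xpredT (fun q => if (q %% m == i)%N then G q else 0)).
rewrite mulnS addnC.
rewrite (big_cat_nat _ (leq_addr _ _)) //=; congr (_ + _).
rewrite -[(m * M)%N]add0n big_addn !add0n addKn (big_mkord xpredT) (bigD1 (Ordinal hi)) //= big1.
  have e : ((i + m * M) %% m = i)%N by rewrite addnC mulnC modnMDl modn_small.
  by rewrite e eqxx addr0 addnC.
move=> j /eqP hj.
have e : ((j + m * M) %% m = j)%N by rewrite addnC mulnC modnMDl modn_small.
rewrite e; case: eqP => // e'.
by exfalso; apply: hj; apply: val_inj.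
Qed.

Lemma inV_prefix k q : inV k.+1 q -> inV k (q %/ m).
Proof.
have m0 : (0 < m)%N by apply: leq_trans m2.
move=> /andP [hq h2]; apply/andP; split.
  by rewrite ltn_divLR // -expnSr.
case: k h2 hq => [|k] h2 hq; first by [].
case: k h2 hq => [|k] h2 hq; first by [].
move: h2 => /= h2; rewrite /=.
have hdm : ((q %/ m * m) <= q)%N by rewrite leq_divM.
have : ((q %/ m)%:R * m%:R <= q%:R :> R) by rewrite -natrM ler_nat.
move: h2; rewrite expnS natrM => h2 h3.
have mp : (0 : R) < m%:R by rewrite ltr0n.
have : (q %/ m)%:R * m%:R < t * (m ^ k.+2)%:R * m%:R :> R.
  apply: le_lt_trans h3 _; nra.
by rewrite ltr_pM2r.
Qed.

Lemma inV_child k p i : (i < m)%N -> inV k.+1 (m * p + i) -> inV k p.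
Proof. by move=> hi /inV_prefix; rewrite (divmodP p hi).1. Qed.

Definition rT (i : nat) (x : nat -> nat -> C) k q : C :=
  if k is k'.+1 then (if inV k q && (q %% m == i)%N then x k' (q %/ m)%N else 0) else 0.
Definition rTs (i : nat) (x : nat -> nat -> C) k p : C :=
  if [&& inV k p, inV k.+1 (m * p + i) & (i < m)%N] then x k.+1 (m * p + i)%N else 0.

Definition lev (f : nat -> nat -> R) k := \sum_(p < m ^ k) f k p.
Lemma psum_lev f K : psum f K = \sum_(k < K) lev f k.
Proof. by []. Qed.

Lemma lev_rT i x k : lev (fun k p => sq (rT i x k p)) k.+1 <= lev (fun k p => sq (x k p)) k.
Proof.
rewrite /lev /=; case: (ltnP i m) => hi; last first.
  rewrite big1 ?sumr_ge0 // => [? _|q _]; first exact: sq_ge0.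
  case: ifP => [/andP [_ /eqP e]|]; last by rewrite sq0.
  have m0 : (0 < m)%N by apply: leq_trans m2.
  by have := ltn_mod q m; rewrite e m0 ltnNge hi.
apply: le_trans (_ : \sum_(q < m ^ k.+1) (if (q %% m == i)%N then sq (x k (q %/ m)%N) else 0) <= _).
  apply: ler_sum => q _; case: ifP => [/andP [_ ->] //|_]; rewrite sq0.
  by case: ifP => // _; apply: sq_ge0.
rewrite expnS (reidx (fun q => sq (x k (q %/ m)%N))) //.
by apply: ler_sum => p _; rewrite (divmodP p hi).1.
Qed.
Lemma lev_rTs i x k : lev (fun k p => sq (rTs i x k p)) k <= lev (fun k p => sq (x k p)) k.+1.
Proof.
rewrite /lev /=; case: (ltnP i m) => hi; last first.
  rewrite big1 ?sumr_ge0 // => [? _|p _]; first exact: sq_ge0.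
  by rewrite /rTs ltnNge hi !andbF sq0.
apply: le_trans (_ : \sum_(p < m ^ k) sq (x k.+1 (m * p + i)%N) <= _).
  by apply: ler_sum => p _; rewrite /rTs; case: ifP => _; rewrite ?sq0 ?sq_ge0.
rewrite -(reidx (fun q => sq (x k.+1 q))) // -expnS.
by apply: ler_sum => q _; case: ifP => _ //; apply: sq_ge0.
Qed.

Lemma psum_rT i x K : psum (fun k p => sq (rT i x k p)) K <= psum (fun k p => sq (x k p)) K.
Proof.
case: K => [|K]; first by rewrite /psum !big_ord0.
rewrite /psum big_ord_recl /= big1 ?add0r; last by move=> p _; rewrite sq0.
apply: le_trans (_ : \sum_(k < K) lev (fun k p => sq (x k p)) k <= _).
  by apply: ler_sum => k _; apply: lev_rT.
by apply: (@psum_mono (fun k p => sq (x k p))) => // *; apply: sq_ge0.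
Qed.

Lemma psum_rTs i x K : psum (fun k p => sq (rTs i x k p)) K <= psum (fun k p => sq (x k p)) K.+1.
Proof.
rewrite {2}/psum big_ord_recl /=.
apply: le_trans (_ : \sum_(k < K) lev (fun k p => sq (x k p)) k.+1 <= _).
  by apply: ler_sum => k _; apply: lev_rTs.
rewrite lerDr; apply: sumr_ge0 => p _; exact: sq_ge0.
Qed.

Lemma isl2_rT i x : isl2 x -> isl2 (rT i x).
Proof.
move=> [sx [M hM]]; split.
  by move=> [|k] q hq //=; rewrite (negbTE hq).
by exists M => K; apply: le_trans (psum_rT i x K) (hM K).
Qed.

Lemma isl2_rTs i x : isl2 x -> isl2 (rTs i x).
Proof.
move=> [sx [M hM]]; split.
  by move=> k p hp; rewrite /rTs (negbTE hp).
by exists M => K; apply: le_trans (psum_rTs i x K) (hM K.+1).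
Qed.

Definition Top (i : nat) (x : L2) : L2 := MkL2 (asboolT (isl2_rT i (vecl2 x))).
Definition Tsop (i : nat) (x : L2) : L2 := MkL2 (asboolT (isl2_rTs i (vecl2 x))).

Lemma vecT i x k q : vec (Top i x) k q = rT i (vec x) k q. Proof. by []. Qed.
Lemma vecTs i x k q : vec (Tsop i x) k q = rTs i (vec x) k q. Proof. by []. Qed.

Lemma Top_lin i (a : C) x y : Top i (a *: x + y) = a *: Top i x + Top i y.
Proof.
apply: L2_ext => k q; rewrite vecD vecZ !vecT /rT.
case: k => [|k]; first by rewrite mulr0 addr0.
by case: ifP => _; rewrite ?vecD ?vecZ // mulr0 addr0.
Qed.

Lemma Tsop_lin i (a : C) x y : Tsop i (a *: x + y) = a *: Tsop i x + Tsop i y.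
Proof.
apply: L2_ext => k q; rewrite vecD vecZ !vecTs /rTs.
by case: ifP => _; rewrite ?vecD ?vecZ // mulr0 addr0.
Qed.

Lemma nrm2_Top i x : nrm2 (Top i x) <= nrm2 x.
Proof. by apply: nrm2_le => K; apply: le_trans (psum_rT i (vec x) K) (psum_le_nrm2 x K). Qed.

Lemma nrm2_Tsop i x : nrm2 (Tsop i x) <= nrm2 x.
Proof. by apply: nrm2_le => K; apply: le_trans (psum_rTs i (vec x) K) (psum_le_nrm2 x K.+1). Qed.

Lemma bounded_Top i : bounded_op ip (Top i).
Proof.
split; first exact: Top_lin.
by exists 1 => x; rewrite mul1r !hnormE ler_sqrt ?nrm2_ge0 ?nrm2_Top.
Qed.

Lemma Re_sum I (r : seq I) (P : pred I) (F : I -> C) :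
  complex.Re (\sum_(i <- r | P i) F i) = \sum_(i <- r | P i) complex.Re (F i).
Proof. by apply: (big_morph (@complex.Re R)) => // [[a b] [c d]]. Qed.
Lemma Im_sum I (r : seq I) (P : pred I) (F : I -> C) :
  complex.Im (\sum_(i <- r | P i) F i) = \sum_(i <- r | P i) complex.Im (F i).
Proof. by apply: (big_morph (@complex.Im R)) => // [[a b] [c d]]. Qed.

Lemma lev_adj i (x y : L2) k :
  \sum_(q < m ^ k.+1) rT i (vec x) k.+1 q * conjc (vec y k.+1 q) =
  \sum_(p < m ^ k) vec x k p * conjc (rTs i (vec y) k p).
Proof.
have [sx _] := vecl2 x.
case: (ltnP i m) => hi; last first.
  rewrite !big1 // => [p _|q _]; first by rewrite /rTs ltnNge hi !andbF conjc0 mulr0.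
  rewrite /=; case: ifP => [/andP [_ /eqP e]|]; last by rewrite mul0r.
  have m0 : (0 < m)%N by apply: leq_trans m2.
  by have := ltn_mod q m; rewrite e m0 ltnNge hi.
rewrite (_ : \sum_(q < m ^ k.+1) _ = \sum_(q < m * m ^ k)
   (if (q %% m == i)%N then (fun q => if inV k.+1 q then vec x k (q %/ m)%N * conjc (vec y k.+1 q) else 0) q else 0)); last first.
  rewrite expnS; apply: eq_bigr => q _ /=.
  by case: (inV k.+1 q); case: (q %% m == i)%N; rewrite ?mul0r.
rewrite (reidx (fun q => if inV k.+1 q then vec x k (q %/ m)%N * conjc (vec y k.+1 q) else 0)) //.
apply: eq_bigr => p _ /=.
rewrite (divmodP p hi).1 /rTs hi.
case h: (inV k.+1 (m * p + i)); last by rewrite !(andbF, andFb, andbT) conjc0 mulr0.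
case h': (inV k p); last by rewrite sx ?h' // !mul0r.
by [].
Qed.

Lemma psum_adj_re i x y K :
  psum (reF (Top i x) y) K.+1 = psum (reF x (Tsop i y)) K.
Proof.
rewrite /psum big_ord_recl /= big1 ?add0r; last by move=> p _; rewrite /reF vecT /= mul0r.
apply: eq_bigr => k _; rewrite /reF.
have := congr1 (@complex.Re R) (lev_adj i x y k).
by rewrite !Re_sum.
Qed.

Lemma psum_adj_im i x y K :
  psum (imF (Top i x) y) K.+1 = psum (imF x (Tsop i y)) K.
Proof.
rewrite /psum big_ord_recl /= big1 ?add0r; last by move=> p _; rewrite /imF vecT /= mul0r.
apply: eq_bigr => k _; rewrite /imF.
have := congr1 (@complex.Im R) (lev_adj i x y k).
by rewrite !Im_sum.
Qed.

Lemma adj_Top i : is_adjoint ip (Top i) (Tsop i).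
Proof.
move=> x y; rewrite /ip; congr Complex.
  apply: esym; apply: limn_eq.
  rewrite (_ : psum (reF x (Tsop i y)) = (fun K => psum (reF (Top i x) y) K.+1)).
    by rewrite (cvg_shiftS (psum (reF (Top i x) y))); exact: cvg_reF.
  by apply/funext => K; rewrite psum_adj_re.
apply: esym; apply: limn_eq.
rewrite (_ : psum (imF x (Tsop i y)) = (fun K => psum (imF (Top i x) y) K.+1)).
  by rewrite (cvg_shiftS (psum (imF (Top i x) y))); exact: cvg_imF.
by apply/funext => K; rewrite psum_adj_im.
Qed.
Variable n : nat.
Hypothesis mn : (m <= n)%N.

Definition Tn (i : 'I_n) : L2 -> L2 := Top i.
Definition Tsn (i : 'I_n) : L2 -> L2 := Tsop i.

Lemma pick_sum (V : zmodType) c (F : nat -> V) : (c < n)%N ->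
  \sum_(i < n) (if (c == i)%N then F i else 0) = F c.
Proof.
move=> hc; rewrite (bigD1 (Ordinal hc)) //= eqxx big1 ?addr0 // => i hi.
case: eqP => // e; exfalso; move: hi => /eqP; apply; exact: val_inj.
Qed.

Lemma Top_sum i I (r : seq I) (P : pred I) (F : I -> L2) :
  Top i (\sum_(j <- r | P j) F j) = \sum_(j <- r | P j) Top i (F j).
Proof.
apply: (big_morph (Top i)).
  move=> x y; apply: L2_ext => k p; rewrite vecD !vecT /rT.
  by case: k => [|k]; [rewrite addr0 | case: ifP => _; rewrite ?addr0].
apply: L2_ext => k p; rewrite vecT /rT vec0; case: k => // k.
by case: ifP => _ //; rewrite vec0.
Qed.

Lemma mod_lt q : (q %% m < n)%N.
Proof. have m0 : (0 < m)%N by apply: leq_trans m2. by apply: leq_trans mn; rewrite ltn_mod. Qed.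

Lemma sumT_Ts (G : L2 -> L2) (c : nat -> bool) :
  (forall y k p, vec (G y) k p = if c k then vec y k p else 0) ->
  forall x k q, vec (\sum_(i < n) Tn i (G (Tsn i x))) k q =
     if k is k'.+1 then (if c k' then vec x k q else 0) else 0.
Proof.
move=> hG x k q; rewrite vec_sum.
case: k => [|k]; first by rewrite big1.
have m0 : (0 < m)%N by apply: leq_trans m2.
have [sx _] := vecl2 x.
rewrite (eq_bigr (fun i : 'I_n => if (q %% m == i)%N then
    (if inV k.+1 q then (if c k then rTs (q %% m) (vec x) k (q %/ m) else 0) else 0) else 0)); last first.
  move=> i _; rewrite /Tn /Tsn vecT /= hG.
  by case: (inV k.+1 q); case: eqP => [e|]; rewrite ?e ?vecTs.
rewrite (pick_sum (fun _ => if inV k.+1 q then (if c k then rTs (q %% m) (vec x) k (q %/ m) else 0) else 0) (mod_lt q)).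
case hq: (inV k.+1 q); last by rewrite sx ?hq //; case: (c k).
case: (c k) => //; rewrite /rTs.
have e : (m * (q %/ m) + q %% m = q)%N by rewrite mulnC -divn_eq.
by rewrite e hq inV_prefix // ltn_mod m0.
Qed.

Lemma phi_id_vec x k q : vec (phi Tn Tsn id x) k q = if k is k'.+1 then vec x k q else 0.
Proof. by rewrite /phi (@sumT_Ts id (fun _ => true)) //; case: k. Qed.
Lemma sum_pick (V : zmodType) N (c : nat) (A : V) :
  \sum_(i < N) (if (nat_of_ord i == c)%N then A else 0) = if (c < N)%N then A else 0.
Proof.
case: (ltnP c N) => hc.
  rewrite (bigD1 (Ordinal hc)) // big1 ?addr0 => [|i hi].
    by rewrite /= eqxx addr0.
  case: eqP => // e; exfalso; move: hi => /eqP; apply; exact: val_inj.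
rewrite big1 // => i _; case: eqP => // e; exfalso.
by move: (ltn_ord i); rewrite e ltnNge hc.
Qed.

Lemma psum_single (j p0 : nat) (c : R) K :
  psum (fun k p => if (k == j) && (p == p0) then c else 0) K =
  if (j < K)%N && (p0 < m ^ j)%N then c else 0.
Proof.
rewrite /psum (eq_bigr (fun k : 'I_K => if (nat_of_ord k == j)%N then (if (p0 < m ^ j)%N then c else 0) else 0)).
  rewrite sum_pick; by case: (j < K)%N.
move=> k _; case: eqP => [e|_]; last by rewrite big1.
by rewrite e sum_pick.
Qed.

Definition Eraw (j p0 : nat) (k p : nat) : C :=
  if [&& (k == j), (p == p0) & inV j p0] then 1 else 0.

Lemma isl2_E j p0 : isl2 (Eraw j p0).
Proof.
split.
  move=> k p hk; rewrite /Eraw; case e1: (k == j); case e2: (p == p0) => //=.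
  by move/eqP: e1 => ?; move/eqP: e2 => ?; subst; rewrite (negbTE hk).
exists 1 => K; rewrite (@psum_ext _ (fun k p => if (k == j) && (p == p0) then
   (if inV j p0 then 1 else 0) else 0) K).
  by rewrite psum_single; case: ifP => _; [case: ifP => _|]; rewrite ?ler01 ?lexx.
move=> k p; rewrite /Eraw; case: (k == j); case: (p == p0); case: (inV j p0);
  by rewrite /= ?sq0 // /sq /= expr1n expr0n addr0.
Qed.

Definition E j p0 : L2 := MkL2 (asboolT (isl2_E j p0)).

Lemma vecE j p0 k p : vec (E j p0) k p = Eraw j p0 k p. Proof. by []. Qed.

Lemma ipE_right x j p0 : inV j p0 -> ip x (E j p0) = vec x j p0.
Proof.
move=> hv; have hp : (p0 < m ^ j)%N by case/andP: hv.
have hre : ipRe x (E j p0) = complex.Re (vec x j p0).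
  apply: limn_eq; apply: cvg_near_cst; near=> K.
  rewrite (@psum_ext _ (fun k p => if (k == j) && (p == p0) then complex.Re (vec x j p0) else 0) K).
    rewrite psum_single hp andbT; case: ifP => // /negbT; rewrite -leqNgt => hK.
    exfalso; move: hK; apply/negP; rewrite -ltnNge; near: K; exact: nbhs_infty_gt.
  move=> k p; rewrite /reF vecE /Eraw hv andbT.
  case e1: (k == j); case e2: (p == p0); rewrite /=;
    try (move/eqP: e1 => ->; move/eqP: e2 => ->);
    by case: (vec _ _ _) => a b /=; ring.
have him : ipIm x (E j p0) = complex.Im (vec x j p0).
  apply: limn_eq; apply: cvg_near_cst; near=> K.
  rewrite (@psum_ext _ (fun k p => if (k == j) && (p == p0) then complex.Im (vec x j p0) else 0) K).
    rewrite psum_single hp andbT; case: ifP => // /negbT; rewrite -leqNgt => hK.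
    exfalso; move: hK; apply/negP; rewrite -ltnNge; near: K; exact: nbhs_infty_gt.
  move=> k p; rewrite /imF vecE /Eraw hv andbT.
  case e1: (k == j); case e2: (p == p0); rewrite /=;
    try (move/eqP: e1 => ->; move/eqP: e2 => ->);
    by case: (vec _ _ _) => a b /=; ring.
by rewrite /ip hre him; case: (vec x j p0).
Unshelve. all: end_near.
Qed.

Lemma ip_sym x y : ip y x = conjc (ip x y).
Proof. by have [_ h _ _] := ip_is_inner; rewrite h /cconj /cRe /cIm; case: (ip x y). Qed.

Lemma ipE_left x j p0 : inV j p0 -> ip (E j p0) x = conjc (vec x j p0).
Proof. by move=> hv; rewrite ip_sym ipE_right. Qed.

Lemma inV00 : inV 0 0.
Proof. by rewrite /inV expn0. Qed.

Lemma defect_vec x : x - phi Tn Tsn id x = vec x 0 0 *: E 0 0.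
Proof.
apply: L2_ext => k p; rewrite vecB vecZ phi_id_vec vecE /Eraw inV00 andbT.
case: k => [|k] /=; last by rewrite subrr mulr0.
rewrite subr0; case: eqP => [->|hp]; first by rewrite mulr1.
have [sx _] := vecl2 x; rewrite sx ?mulr0 //.
by rewrite /inV expn0 ltnS leqn0; apply/negP => /andP [/eqP].
Qed.

Lemma phi_id_eq x : phi Tn Tsn id x = (- vec x 0 0) *: E 0 0 + x.
Proof.
by rewrite scaleNr -defect_vec opprB subrK.
Qed.

Lemma op_le_phi : op_le ip (phi Tn Tsn id) id.
Proof.
move=> x; rewrite phi_id_eq ip_lin ipE_left ?inV00 //=.
rewrite /cIm /cRe; case: (vec x 0 0) => a b /=.
split; first by ring.
have : 0 <= a * a + b * b by nra.
lra.
Qed.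
Definition cnt k p : nat := \sum_(i < n) [&& inV k p, inV k.+1 (m * p + i) & (i < m)%N].

Lemma sum_ltm_gen N : (\sum_(i < N) (i < m)%N = minn N m)%N.
Proof.
elim: N => [|N IH]; first by rewrite big_ord0 min0n.
rewrite big_ord_recr /= IH; case: (ltnP N m) => h /=; lia.
Qed.

Lemma sum_ltm : (\sum_(i < n) (i < m)%N = m)%N.
Proof. by rewrite sum_ltm_gen; lia. Qed.

Lemma cnt_le k p : (cnt k p <= m)%N.
Proof.
rewrite /cnt; apply: (@leq_trans (\sum_(i < n) (i < m))%N); last by rewrite sum_ltm.
apply: leq_sum => i _.
by case: (inV k p); case: (inV _ _); case: (i < m)%N.
Qed.

Lemma cnt00 : cnt 0 0 = m.
Proof.
rewrite /cnt; transitivity (\sum_(i < n) (i < m))%N; last exact: sum_ltm.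
apply: eq_bigr => i _.
rewrite inV00 muln0 add0n /inV expn1 /=.
by case: (i < m)%N.
Qed.

Lemma natC (k : nat) : (k%:R : C) = Complex k%:R 0.
Proof.
elim: k => [|k IH] //; rewrite -natr1 IH.
by apply/eqP; rewrite eq_complex /= natr1 addr0 !eqxx.
Qed.

Lemma phistar_vec x k p : vec (phistar Tn Tsn id x) k p = (cnt k p)%:R * vec x k p.
Proof.
rewrite /phistar vec_sum /cnt natr_sum mulr_suml; apply: eq_bigr => i _.
rewrite /Tn /Tsn vecTs /rTs vecT /=.
case h: [&& inV k p, inV k.+1 (m * p + i) & (i < m)%N]; last by rewrite mul0r.
move: h => /and3P [h1 h2 h3]; rewrite h2 /= (divmodP p h3).1 (divmodP p h3).2 eqxx.
by rewrite mul1r.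
Qed.

Lemma sq_natC (k : nat) : sq (k%:R : C) = (k%:R) ^+ 2.
Proof. by rewrite natC /sq /= expr0n addr0. Qed.

Lemma nrm2Z (c : C) x : nrm2 (c *: x) = sq c * nrm2 x.
Proof.
apply: limn_eq; rewrite (_ : psum _ = (fun K => sq c * psum (fun k p => sq (vec x k p)) K)).
  by apply: cvgMl_tmp; exact: cvg_nrm2.
apply/funext => K; rewrite -psumZ; apply: psum_ext => k p; by rewrite vecZ sqM.
Qed.

Lemma nrm2E00 : nrm2 (E 0 0) = 1.
Proof.
by rewrite -ipRe_nrm2 (_ : ipRe _ _ = complex.Re (ip (E 0 0) (E 0 0))) // ipE_right ?inV00.
Qed.

Lemma mR0 : (0 : R) <= m%:R. Proof. exact: ler0n. Qed.

Lemma hnorm_phistar x : hnorm ip (phistar Tn Tsn id x) <= m%:R * hnorm ip x.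
Proof.
rewrite !hnormE.
have -> : m%:R * Num.sqrt (nrm2 x) = Num.sqrt (m%:R ^+ 2 * nrm2 x).
  by rewrite sqrtrM ?exprn_ge0 ?mR0 // sqrtr_sqr ger0_norm // mR0.
rewrite ler_sqrt; last by rewrite mulr_ge0 ?exprn_ge0 ?mR0 ?nrm2_ge0.
apply: nrm2_le => K; apply: le_trans (_ : psum (fun k p => m%:R ^+ 2 * sq (vec x k p)) K <= _).
  apply: psum_le => k p; rewrite phistar_vec sqM sq_natC ler_wpM2r ?sq_ge0 //.
  by rewrite lerXn2r ?nnegrE ?ler0n // ler_nat cnt_le.
by rewrite psumZ ler_wpM2l ?exprn_ge0 ?mR0 // psum_le_nrm2.
Qed.

Lemma phistarE00 : phistar Tn Tsn id (E 0 0) = m%:R *: E 0 0.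
Proof.
apply: L2_ext => k p; rewrite phistar_vec vecZ vecE /Eraw inV00 andbT.
case: eqP => [->|]; last by rewrite !mulr0.
by case: eqP => [->|]; rewrite ?cnt00 ?mulr0.
Qed.

Lemma opnorm_phistar : opnorm ip (phistar Tn Tsn id) = m%:R.
Proof.
rewrite /opnorm.
set S := [set hnorm ip (phistar Tn Tsn id x) | x in [set x | hnorm ip x <= 1]].
have ub : ubound S m%:R.
  move=> _ [x /= hx <-]; apply: le_trans (hnorm_phistar x) _.
  by rewrite -[leRHS]mulr1 ler_wpM2l ?mR0.
have mS : S m%:R.
  exists (E 0 0); first by rewrite /= hnormE nrm2E00 sqrtr1.
  rewrite phistarE00 hnormE nrm2Z nrm2E00 mulr1 sq_natC sqrtr_sqr ger0_norm //; exact: mR0.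
apply/le_anti/andP; split.
  by apply: ge_sup => //; exists m%:R.
by apply: sup_upper_bound => //; split; [exists m%:R | exists m%:R].
Qed.
Lemma isl2_lproj (c : nat -> bool) x : isl2 x -> isl2 (fun k p => if c k then x k p else 0).
Proof.
move=> [sx [M hM]]; split; first by move=> k p hk; rewrite sx // if_same.
exists M => K; apply: le_trans (hM K); apply: psum_le => k p.
by case: (c k); rewrite ?sq0 ?sq_ge0.
Qed.

Definition lproj (c : nat -> bool) (x : L2) : L2 := MkL2 (asboolT (isl2_lproj c (vecl2 x))).
Lemma vec_lproj c x k p : vec (lproj c x) k p = if c k then vec x k p else 0. Proof. by []. Qed.

Lemma big_tuple_cons (V : zmodType) j (F : seq 'I_n -> V) :
  \sum_(a : j.+1.-tuple 'I_n) F a = \sum_(i < n) \sum_(a : j.-tuple 'I_n) F (i :: a).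
Proof.
rewrite (partition_big (fun a : j.+1.-tuple 'I_n => thead a) xpredT) //=.
apply: eq_bigr => i _.
rewrite (reindex_onto (fun a : j.-tuple 'I_n => [tuple of i :: a]) (fun w => behead_tuple w)) /=.
  apply: eq_bigl => a; rewrite theadE eqxx /=; apply/eqP; apply: val_inj => /=. by [].
move=> w /eqP <-; apply: val_inj => /=; rewrite [in RHS](tuple_eta w) /=. by [].
Qed.

Definition Q j x := \sum_(a : j.-tuple 'I_n) Talpha Tn a (defect Tn Tsn id (Tsalpha Tsn a x)).

Lemma Q_succ j x : Q j.+1 x = \sum_(i < n) Tn i (Q j (Tsn i x)).
Proof.
rewrite /Q (@big_tuple_cons _ j (fun a => Talpha Tn a (defect Tn Tsn id (Tsalpha Tsn a x)))).
apply: eq_bigr => i _; rewrite /Tn Top_sum; apply: eq_bigr => a _ /=.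
by [].
Qed.

Lemma Q_vec j x k p : vec (Q j x) k p = if k == j then vec x k p else 0.
Proof.
elim: j x k p => [|j IH] x k p.
  rewrite /Q (eq_bigr (fun _ => defect Tn Tsn id x)); last first.
    by move=> a _; rewrite (tuple0 a).
  rewrite sumr_const card_tuple expn0 mulr1n /defect /= phi_id_vec.
  by case: k => [|k] /=; rewrite ?subr0 ?subrr.
rewrite Q_succ.
have hG : forall y k p, vec (Q j y) k p = if (k == j) then vec y k p else 0 by [].
rewrite (@sumT_Ts (Q j) (fun k => k == j) hG x k p).
by case: k.
Qed.

Lemma KPK_vec k x k' p : vec (KPK Tn Tsn id k x) k' p = if (k' <= k)%N then vec x k' p else 0.
Proof.
rewrite /KPK vec_sum.
rewrite (eq_bigr (fun j : 'I_k.+1 => if (nat_of_ord j == k')%N then vec x k' p else 0)); last first.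
  by move=> j _; rewrite -/(Q j x) Q_vec eq_sym.
by rewrite sum_pick ltnS.
Qed.
Lemma conjD (a b : C) : conjc (a + b) = conjc a + conjc b.
Proof. by case: a => a1 a2; case: b => b1 b2; apply/eqP; rewrite eq_complex /= opprD !eqxx. Qed.
Lemma conjM (a b : C) : conjc (a * b) = conjc a * conjc b.
Proof. case: a => a1 a2; case: b => b1 b2; apply/eqP; rewrite eq_complex /=; apply/andP; split; apply/eqP; ring. Qed.
Lemma conjK (a : C) : conjc (conjc a) = a.
Proof. by case: a => a1 a2; rewrite /= opprK. Qed.
Lemma conj0 : conjc (0 : C) = 0.
Proof. by apply/eqP; rewrite eq_complex /= oppr0 !eqxx. Qed.
Lemma conj_sum I (r : seq I) (F : I -> C) : conjc (\sum_(i <- r) F i) = \sum_(i <- r) conjc (F i).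
Proof. by apply: (big_morph (@conjc R)) => [x y|]; rewrite ?conjD ?conj0. Qed.
Lemma Re_mulconj (c : C) : complex.Re (c * conjc c) = sq c.
Proof. by case: c => a b; rewrite /sq /=; ring. Qed.
Lemma sq_conj (c : C) : sq (conjc c) = sq c.
Proof. by case: c => a b; rewrite /sq /=; ring. Qed.

Lemma ipDl u v w : ip (u + v) w = ip u w + ip v w.
Proof. by rewrite -[u]scale1r ip_lin mul1r scale1r. Qed.
Lemma ip0l w : ip 0 w = 0.
Proof.
have := ipDl 0 0 w; rewrite addr0 => h.
by move/(congr1 (fun z => z - ip 0 w)): h; rewrite subrr addrK.
Qed.
Lemma ipZl a u w : ip (a *: u) w = a * ip u w.
Proof. by rewrite -[a *: u]addr0 ip_lin ip0l addr0. Qed.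
Lemma ipNl u w : ip (- u) w = - ip u w.
Proof. by rewrite -scaleN1r ipZl mulN1r. Qed.
Lemma ipBl u v w : ip (u - v) w = ip u w - ip v w.
Proof. by rewrite ipDl ipNl. Qed.
Lemma ip_suml I (r : seq I) (F : I -> L2) w : ip (\sum_(i <- r) F i) w = \sum_(i <- r) ip (F i) w.
Proof. by apply: (big_morph (fun u => ip u w)) => [x y|]; rewrite /= ?ipDl ?ip0l. Qed.
Lemma ipBr u v w : ip w (u - v) = ip w u - ip w v.
Proof. by rewrite ip_sym ipBl conjD (ip_sym w u) (ip_sym w v) -!/(conjc _) ; case: (ip u w) => a b; case: (ip v w) => c d; rewrite /= !opprK ?opprD. Qed.
Lemma Re_conj (z : C) : complex.Re (conjc z) = complex.Re z.
Proof. by case: z. Qed.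

Lemma bessel (s : seq L2) x : Defs.orthonormal ip s -> \sum_(e <- s) sq (ip x e) <= nrm2 x.
Proof.
move=> hon; rewrite (big_nth 0) big_mkord.
set N := size s.
pose e := fun i : 'I_N => nth 0 s i.
pose c := fun i : 'I_N => ip x (e i).
pose S := \sum_(i < N) c i *: e i.
have hSx : ip S x = \sum_(i < N) c i * conjc (c i).
  rewrite /S ip_suml; apply: eq_bigr => i _; by rewrite ipZl ip_sym.
have hSe : forall i : 'I_N, ip S (e i) = c i.
  move=> i; rewrite /S ip_suml (bigD1 i) //= big1 ?addr0.
    by rewrite ipZl /e hon // eqxx mulr1.
  move=> j hj; rewrite ipZl /e hon //.
  by case: eqP => [/val_inj e'|]; [move: hj; rewrite e' eqxx | rewrite mulr0].
have hSS : ip S S = \sum_(i < N) c i * conjc (c i).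
  rewrite {1}/S ip_suml; apply: eq_bigr => i _; by rewrite ipZl ip_sym hSe.
have hpos : 0 <= complex.Re (ip (x - S) (x - S)).
  by have [_ _ h _] := ip_is_inner; have [_ ] := h (x - S).
rewrite ipBl !ipBr (ip_sym S x) hSx hSS in hpos.
move: hpos; rewrite subrr subr0.
set z := \sum_(i < N) _.
have -> : complex.Re (ip x x - conjc z) = complex.Re (ip x x) - complex.Re z.
  by case: (ip x x) => ? ?; case: z => ? ? /=.
have -> : complex.Re (ip x x) = nrm2 x by rewrite -ipRe_nrm2.
rewrite subr_ge0 /z Re_sum => h; apply: le_trans h.
by apply: ler_sum => i _; rewrite Re_mulconj.
Qed.
Definition Nj j : nat := \sum_(p < m ^ j) inV j p.
Definition NN k : nat := \sum_(j < k.+1) Nj j.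

Lemma nrm2E j p : inV j p -> nrm2 (E j p) = 1.
Proof.
move=> hv; rewrite -ipRe_nrm2 (_ : ipRe _ _ = complex.Re (ip (E j p) (E j p))) //.
by rewrite ipE_right // vecE /Eraw !eqxx hv.
Qed.

Lemma reip_KPK k e : complex.Re (ip (KPK Tn Tsn id k e) e) = psum (fun k p => sq (vec e k p)) k.+1.
Proof.
rewrite /=; apply: limn_eq; apply: cvg_near_cst; near=> K.
rewrite /psum (eq_bigr (fun k' : 'I_K => if (k' < k.+1)%N then \sum_(p < m ^ k') sq (vec e k' p) else 0)); last first.
  move=> k' _; rewrite ltnS; case: ifP => hk.
    by apply: eq_bigr => p _; rewrite /reF KPK_vec hk Re_mulconj.
  by rewrite big1 // => p _; rewrite /reF KPK_vec hk mul0r.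
rewrite -big_mkcond /= -(big_ord_widen K (fun k' => \sum_(p < m ^ k') sq (vec e k' p))) //.
near: K; exact: nbhs_infty_ge.
Unshelve. all: end_near.
Qed.

Lemma KPK_upper k (s : seq L2) : Defs.orthonormal ip s ->
  \sum_(e <- s) complex.Re (ip (KPK Tn Tsn id k e) e) <= (NN k)%:R.
Proof.
move=> hon.
rewrite (eq_bigr (fun e => psum (fun k p => sq (vec e k p)) k.+1)); last by move=> e _; rewrite reip_KPK.
rewrite /psum exchange_big /= /NN natr_sum; apply: ler_sum => j _.
rewrite exchange_big /= /Nj natr_sum; apply: ler_sum => p _.
case hv: (inV j p); last first.
  rewrite big1 // => e _; have [sx _] := vecl2 e; rewrite sx ?hv // sq0 //.
apply: le_trans (_ : nrm2 (E j p) <= _); last by rewrite nrm2E.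
apply: le_trans (bessel (E j p) hon); apply: ler_sum => e _.
by rewrite ipE_left // sq_conj.
Qed.

Definition idx k := [seq jp <- [seq (j, p) | j <- index_iota 0 k.+1, p <- index_iota 0 (m ^ k)] | inV jp.1 jp.2].
Definition s0 k := [seq E jp.1 jp.2 | jp <- idx k].

Lemma idx_uniq k : uniq (idx k).
Proof.
apply: filter_uniq; apply: allpairs_uniq; rewrite ?iota_uniq //.
by move=> [a b] [c d] _ _ /=.
Qed.

Lemma idx_mem k jp : jp \in idx k -> inV jp.1 jp.2 && (jp.1 < k.+1)%N.
Proof.
rewrite mem_filter => /andP [-> /allpairsP [[a b] [ha hb ->]]] /=.
by move: ha; rewrite mem_iota.
Qed.

Lemma s0_orth k : Defs.orthonormal ip (s0 k).
Proof.
move=> i j; rewrite size_map => hi hj.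
rewrite /s0 !(nth_map (0%N, 0%N)) //.
have hab := nth_uniq (0%N, 0%N) hj hi (idx_uniq k).
have /andP [hvj _] := idx_mem (mem_nth (0%N, 0%N) hj).
have /andP [hvi _] := idx_mem (mem_nth (0%N, 0%N) hi).
move: hab hvj hvi; rewrite eq_sym [(j == i)]eq_sym.
case: (nth _ (idx k) i) => a1 a2; case: (nth _ (idx k) j) => b1 b2 /= hab hb ha.
rewrite ipE_right // vecE /Eraw ha andbT.
by rewrite -hab xpair_eqE eq_sym [(b2 == a2)]eq_sym.
Qed.

Lemma s0_sum k : \sum_(e <- s0 k) complex.Re (ip (KPK Tn Tsn id k e) e) = (NN k)%:R.
Proof.
rewrite big_map.
rewrite (eq_big_seq (fun _ => 1)); last first.
  move=> jp /idx_mem /andP [hv hj]; rewrite reip_KPK.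
  rewrite (@psum_ext _ (fun k' p => if (k' == jp.1) && (p == jp.2) then (if inV jp.1 jp.2 then 1 else 0) else 0)).
    rewrite psum_single hj hv /=; by case/andP: hv => ->.
  move=> k' p; rewrite vecE /Eraw; case: (k' == jp.1); case: (p == jp.2); case: (inV jp.1 jp.2);
  by rewrite /= ?sq0 // /sq /= expr1n expr0n addr0.
rewrite /idx big_filter big_mkcond big_allpairs /= big_mkord /NN natr_sum.
apply: eq_big => // j _; rewrite big_mkord /Nj natr_sum.
have hjk : (m ^ j <= m ^ k)%N by rewrite leq_pexp2l ?(leq_trans _ m2) // -ltnS.
rewrite (big_ord_widen (m ^ k) (fun p => ((nat_of_bool (inV j p))%:R : R))) // [RHS]big_mkcond /=.
apply: eq_bigr => p _; case hv: (inV j p) => /=.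
  by case/andP: hv => ->.
by case: ifP.
Qed.

Lemma ptrace_KPK k : ptrace ip (KPK Tn Tsn id k) = ((NN k)%:R)%:E.
Proof.
rewrite /ptrace /cRe; apply/le_anti/andP; split.
  apply: ge_ereal_sup => _ [s hs <-]; rewrite lee_fin; exact: KPK_upper.
apply: ereal_sup_ubound; exists (s0 k); first exact: s0_orth.
by rewrite s0_sum.
Qed.
Lemma count_bounds (x : R) M : 0 < x ->
  (M%:R <= x -> (\sum_(p < M) (nat_of_bool ((p%:R : R) < x)%R))%N = M) /\
  (x < M%:R -> x <= (\sum_(p < M) (nat_of_bool ((p%:R : R) < x)%R))%N%:R < x + 1).
Proof.
move=> x0; elim: M => [|M [IH1 IH2]].
  by rewrite big_ord0; split => // h; exfalso; move: (lt_trans x0 h); rewrite ltxx.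
rewrite big_ord_recr /= -natr1; split.
  move=> h; have hM : M%:R <= x by apply: le_trans h; rewrite lerDl.
  rewrite IH1 //; have -> : (M%:R < x) by apply: lt_le_trans h; rewrite ltrDl.
  by rewrite addn1.
move=> h; case: (lerP (M%:R) x) => hM.
  rewrite IH1 //; case: (ltrP (M%:R) x) => hMx /=.
    by rewrite addn1 -natr1 (ltW h) /= ltrD2r.
  have e : M%:R = x by apply/le_anti/andP.
  by rewrite addn0 e lexx /= ltrDl.
have := IH2 hM; rewrite (_ : (M%:R < x) = false) ?addn0 //.
by apply/negbTE; rewrite -leNgt ltW.
Qed.

Definition Dk k : R := \sum_(j < k.+1) (m%:R) ^+ j.

Lemma Nj_bounds j : t * (m%:R) ^+ j <= (Nj j)%:R <= t * (m%:R) ^+ j + m%:R.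
Proof.
have mR : (2 : R) <= m%:R by rewrite (ler_nat R 2 m).
case: j => [|[|j]].
- rewrite /Nj expn0 big_ord1 inV00 expr0 mulr1 /=; apply/andP; split; [exact: t1 | ]. apply: le_trans (_ : (1:R) <= m%:R) _; [by rewrite ler1n (ltnW m2) | by rewrite lerDr ltW].
- rewrite /Nj expn1 (eq_bigr (fun _ => 1%N)); last first.
    by move=> p _; rewrite /inV expn1 ltn_ord.
  rewrite sum1_card card_ord expr1; apply/andP; split.
    by rewrite ger_pMl // (lt_le_trans _ mR).
  by rewrite lerDr mulr_ge0 // ltW.
- rewrite /Nj.
  set M := (m ^ j.+2)%N.
  have MR : (M%:R : R) = (m%:R) ^+ j.+2 by rewrite natrX.
  rewrite (eq_bigr (fun p : 'I_M => nat_of_bool (p%:R < t * M%:R))); last first.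
    by move=> p _; rewrite /inV ltn_ord.
  have hx : 0 < t * M%:R by rewrite mulr_gt0 // ltr0n expn_gt0 (leq_trans _ m2).
  have [h1 h2] := count_bounds M hx.
  rewrite -MR; case: (lerP (M%:R) (t * M%:R)) => hM.
    rewrite h1 //; have e : t * M%:R = M%:R.
      by apply/le_anti/andP; split => //; rewrite ger_pMl ?ltr0n ?expn_gt0 ?(leq_trans _ m2).
    by rewrite e lexx lerDl ler0n.
  have /andP [a b] := h2 hM; rewrite a /=.
  apply: le_trans (ltW b) _; rewrite lerD2l; apply: le_trans mR; lra.
Qed.

Lemma mpow_ge j : ((j.+1)%:R : R) <= (m%:R) ^+ j.
Proof.
rewrite -natrX ler_nat; elim: j => [|j IH]; first by rewrite expn0.
rewrite expnS; have := m2; nia.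
Qed.

Lemma Dk_ge k : ((k.+1)%:R) ^+ 2 <= 2 * Dk k.
Proof.
elim: k => [|k IH]; first by rewrite /Dk big_ord1 expr0 expr1n; lra.
rewrite /Dk big_ord_recr /= -/(Dk k).
have := mpow_ge k.+1; rewrite -!natr1 => h.
set a := (k%:R : R) in IH h *; nra.
Qed.

Lemma Dk_gt0 k : 0 < Dk k.
Proof.
have := Dk_ge k; have : 0 < ((k.+1)%:R : R) ^+ 2 by rewrite exprn_gt0 // ltr0n.
lra.
Qed.

Lemma NNR k : ((NN k)%:R : R) = \sum_(j < k.+1) ((Nj j)%:R : R).
Proof. by rewrite /NN natr_sum. Qed.

Lemma NN_bounds k : t * Dk k <= (NN k)%:R <= t * Dk k + (k.+1)%:R * m%:R.
Proof.
rewrite NNR /Dk mulr_sumr; apply/andP; split.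
  by apply: ler_sum => j _; case/andP: (Nj_bounds j).
have -> : \sum_(j < k.+1) t * m%:R ^+ j + (k.+1)%:R * m%:R = \sum_(j < k.+1) (t * m%:R ^+ j + m%:R).
  by rewrite big_split /= sumr_const card_ord mulr_natl.
by apply: ler_sum => j _; case/andP: (Nj_bounds j).
Qed.

Lemma ratio_cvg : (fun k => (NN k)%:R / Dk k) @ \oo --> t.
Proof.
apply: (@squeeze_cvgr _ _ _ _ (fun _ => t) (fun k => t + 2 * m%:R * harmonic k)).
- near=> k; have D0 := Dk_gt0 k; have [hl hu] := andP (NN_bounds k).
  apply/andP; split; first by rewrite ler_pdivlMr.
  rewrite ler_pdivrMr // /harmonic.
  set K1 := ((k.+1)%:R : R).
  have K0 : 0 < K1 by rewrite ltr0n.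
  have hD := Dk_ge k; rewrite -/K1 in hD hu.
  have hh : K1^-1 * K1 = 1 by rewrite mulVf // gt_eqF.
  have hi : 0 < K1^-1 by rewrite invr_gt0.
  have key : K1 <= 2 * Dk k * K1^-1.
    have : K1 ^+ 2 * K1^-1 <= 2 * Dk k * K1^-1 by rewrite ler_wpM2r // ltW.
    by rewrite expr2 -mulrA mulrV ?mulr1 // unitfE gt_eqF.
  have mR : (0 : R) <= m%:R by rewrite ler0n.
  have : K1 * m%:R <= 2 * m%:R * K1^-1 * Dk k.
    have e : 2 * Dk k * K1^-1 * m%:R = 2 * m%:R * K1^-1 * Dk k by ring.
    by rewrite -e; apply: ler_wpM2r.
  by move=> h2; rewrite mulrDl; apply: le_trans hu _; rewrite lerD2l.
- exact: cvg_cst.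
- rewrite -[X in _ --> X]addr0; apply: cvgD; first exact: cvg_cst.
  rewrite -(mulr0 (2 * m%:R)); apply: cvgMl_tmp; exact: cvg_harmonic.
Unshelve. all: end_near.
Qed.
Lemma curv_Tn : curv_eq ip Tn Tsn id t.
Proof.
rewrite /curv_eq.
have -> : curv_seq ip Tn Tsn id = (fun k => ((NN k)%:R / Dk k)%:E).
  by apply/funext => k; rewrite /curv_seq ptrace_KPK opnorm_phistar.
apply: cvg_EFin; first by near=> k.
exact: ratio_cvg.
Unshelve. all: end_near.
Qed.

Lemma main_sec : exists (H : lmodType C) (ip' : H -> H -> C) (T Ts : 'I_n -> H -> H),
    is_hilbert ip' /\
    [/\ (forall i, bounded_op ip' (T i) /\ is_adjoint ip' (T i) (Ts i)),
        op_le ip' (phi T Ts id) id,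
        finite_rank (fun x => x - phi T Ts id x),
        opnorm ip' (phistar T Ts id) = m%:R
      & curv_eq ip' T Ts id t].
Proof.
exists L2, ip, Tn, Tsn; split; first by split; [exact: ip_is_inner | exact: ip_complete].
split.
- by move=> i; split; [exact: bounded_Top | exact: adj_Top].
- exact: op_le_phi.
- exists [:: E 0 0] => x; exists (fun _ => vec x 0 0).
  by rewrite defect_vec big_ord1.
- exact: opnorm_phistar.
- exact: curv_Tn.
Qed.

End Construction.

Theorem proposition6p7 (R : realType) (n m : nat) (t : R) :
  (3 <= n)%N -> (2 <= m)%N -> (m <= n - 1)%N -> (0 < t <= 1) ->
  exists (H : lmodType (complex R)) (ip : H -> H -> complex R)
         (T Ts : 'I_n -> H -> H),
    is_hilbert ip /\
    [/\ (forall i, bounded_op ip (T i) /\ is_adjoint ip (T i) (Ts i)),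
        op_le ip (phi T Ts id) id,
        finite_rank (fun x => x - phi T Ts id x),
        opnorm ip (phistar T Ts id) = m%:R
      & curv_eq ip T Ts id t].
Proof.
move=> hn hm hmn /andP [t0 t1].
have mn : (m <= n)%N by apply: leq_trans hmn (leq_subr 1 n).
exact: (@main_sec R m t hm t0 t1 n mn).
Qed.
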